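(* Let $k\in\mathbb{R}\setminus\{0,-1\}$, $p=1+\frac1k$, and define $M(x,y)=x^pF_k(y/x)$ for $x>0$, $y\ge0$. Then for all $x>0$, $y>0$, $$M_{yy}\Big(M_{xx}+\frac{M_y}{y}\Big)-M_{xy}^2=0,$$ and the matrix $$\begin{pmatrix} M_{xx}+\frac{M_y}{y} & M_{xy}\\ M_{xy} & M_{yy}\end{pmatrix}$$ is negative semidefinite if $p\in\mathbb{R}\setminus[0,1]$ (i.e. $k>-1$) and positive semidefinite if $p\in(0,1)$ (i.e. $k<-1$). Moreover $M(x,0)=x^p$.
   Context: For real $k$, the Hermite function $H_k:\mathbb{R}\to\mathbb{R}$ is the (unique) solution of $H_k''(x)-xH_k'(x)+kH_k(x)=0$ with $H_k(x)=x^k+o(x^k)$ as $x\to+\infty$. For $k>0$ let $R_k$ be the rightmost real zero of $H_k$, and $R_k=-\infty$ if $k\le0$. For $k\in\mathbb{R}\setminus\{0,-1\}$ the map $q\mapsto |H_k'(q)/H_k(q)|$ is a decreasing bijection of $(R_k,\infty)$ onto $(0,\infty)$, and $F_k:[0,\infty)\to\mathbb{R}$ is defined by $F_k(|H_k'(q)/H_k(q)|)=H_{k+1}(q)/H_k(q)^{1+1/k}$ for $q\in(R_k,\infty)$, together with $F_k(0)=1$. *)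

(* Defs.v *)
From Stdlib Require Import Reals Lra ClassicalEpsilon.
Open Scope R_scope.

Definition hermite_asymp (k : R) (H : R -> R) : Prop :=
  forall eps, 0 < eps -> exists A, forall x, A < x -> 0 < x ->
    Rabs (H x / Rpower x k - 1) < eps.

(* H solves H'' - x H' + k H = 0 on R (twice differentiable) and H(x) = x^k + o(x^k).
   By uniqueness, this characterizes the Hermite function H_k. *)
Definition is_hermite (k : R) (H : R -> R) : Prop :=
  (exists H1 H2 : R -> R,
     (forall x, derivable_pt_lim H x (H1 x)) /\
     (forall x, derivable_pt_lim H1 x (H2 x)) /\
     (forall x, H2 x - x * H1 x + k * H x = 0)) /\
  hermite_asymp k H.

(* q lies in (R_k, +oo): R_k = rightmost real zero of H_k when k > 0,
   R_k = -oo when k <= 0. *)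
Definition in_dom (k : R) (H : R -> R) (q : R) : Prop :=
  if Rlt_dec 0 k then (forall z, H z = 0 -> z < q) else True.

(* F_k defined by F_k(|H_k'(q)/H_k(q)|) = H_{k+1}(q)/H_k(q)^{1+1/k} for q in (R_k,oo),
   and F_k(0) = 1.  H = H_k, Hd = H_k', G = H_{k+1}. *)
Definition Fk (k : R) (H Hd G : R -> R) (t : R) : R :=
  if Req_EM_T t 0 then 1 else
  epsilon (inhabits 0) (fun v => exists q, in_dom k H q /\
     t = Rabs (Hd q / H q) /\ v = G q / Rpower (H q) (1 + / k)).

Definition Mfun (k : R) (H Hd G : R -> R) (x y : R) : R :=
  Rpower x (1 + / k) * Fk k H Hd G (y / x).

Definition nsd2 (a b c : R) : Prop :=
  forall u v, a * u * u + 2 * b * u * v + c * v * v <= 0.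
Definition psd2 (a b c : R) : Prop :=
  forall u v, 0 <= a * u * u + 2 * b * u * v + c * v * v.

(* Main.v *)
Require Import Defs.
From Stdlib Require Import Reals ClassicalEpsilon.
From Stdlib Require Import Lra Lia Psatz Classical Ranalysis5.
Open Scope R_scope.


Notation D f x l := (derivable_pt_lim f x l).

Lemma Rdiv_le_0_compat a b : 0 <= a -> 0 < b -> 0 <= a / b.
Proof. intros. unfold Rdiv. apply Rmult_le_pos; auto. left; apply Rinv_0_lt_compat; auto. Qed.

Lemma deq f x l l' : D f x l -> l = l' -> D f x l'.
Proof. intros; subst; auto. Qed.

Lemma dloc f g x l (d : R) : 0 < d -> (forall y, x - d < y < x + d -> f y = g y) ->
  D g x l -> D f x l.
Proof.
  intros Hd E Hg eps He. destruct (Hg eps He) as [del Hdel].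
  assert (Hm : 0 < Rmin del d) by (apply Rmin_pos; [apply cond_pos|lra]).
  exists (mkposreal _ Hm). intros h Hh0 Hh. simpl in Hh.
  assert (Hh1 : Rabs h < del) by (eapply Rlt_le_trans; [apply Hh| apply Rmin_l]).
  assert (Hh2 : Rabs h < d) by (eapply Rlt_le_trans; [apply Hh| apply Rmin_r]).
  rewrite (E x), (E (x+h)). apply Hdel; auto.
  apply Rabs_def2 in Hh2; lra. apply Rabs_def2 in Hh2; lra.
Qed.

Lemma dext f g x l : (forall y, f y = g y) -> D g x l -> D f x l.
Proof. intros E. apply (dloc f g x l 1); [lra| intros; auto]. Qed.

Lemma dmul f g x a b : D f x a -> D g x b -> D (fun y => f y * g y) x (a * g x + f x * b).
Proof. intros. apply (derivable_pt_lim_mult f g x a b); auto. Qed.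

Lemma dplus f g x a b : D f x a -> D g x b -> D (fun y => f y + g y) x (a + b).
Proof. intros. apply (derivable_pt_lim_plus f g x a b); auto. Qed.

Lemma dminus f g x a b : D f x a -> D g x b -> D (fun y => f y - g y) x (a - b).
Proof. intros. apply (derivable_pt_lim_minus f g x a b); auto. Qed.

Lemma dconst c x : D (fun _ => c) x 0.
Proof. apply derivable_pt_lim_const. Qed.

Lemma did x : D (fun y => y) x 1.
Proof. apply derivable_pt_lim_id. Qed.

Lemma dcomp f g x a b : D g x a -> D f (g x) b -> D (fun y => f (g y)) x (b * a).
Proof. intros. apply (derivable_pt_lim_comp g f x a b); auto. Qed.

Lemma dinv f x a : f x <> 0 -> D f x a -> D (fun y => / f y) x (- a / (f x)^2).
Proof.
  intros Hn Hf.
  assert (H1 := derivable_pt_lim_div (fun _ => 1) f x 0 a (dconst 1 x) Hf Hn).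
  eapply dext; [| eapply deq; [apply H1|]].
  - intros; unfold div_fct; simpl; unfold Rdiv; ring.
  - simpl. unfold Rsqr. field. auto.
Qed.

Lemma dexp f x a : D f x a -> D (fun y => exp (f y)) x (exp (f x) * a).
Proof. intros. apply (dcomp exp f x a (exp (f x))); auto. apply derivable_pt_lim_exp. Qed.

Lemma drpow e x : 0 < x -> D (fun s => Rpower s e) x (e * Rpower x e / x).
Proof.
  intros. eapply deq. apply derivable_pt_lim_power; auto.
  unfold Rminus. rewrite Rpower_plus, Rpower_Ropp, Rpower_1; auto. field. lra.
Qed.

Lemma mvt_le f f' a b : a <= b -> (forall c, a <= c <= b -> D f c (f' c)) ->
  (forall c, a < c < b -> 0 <= f' c) -> f a <= f b.
Proof.
  intros Hab Hd Hp. destruct (Req_dec a b) as [->|Hne]; [lra|].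
  destruct (MVT_cor2 f f' a b) as [c [Hc1 Hc2]]; [lra|auto|].
  assert (0 <= f' c * (b - a)) by (apply Rmult_le_pos; [apply Hp; auto|lra]). lra.
Qed.

Lemma mvt_lt f f' a b : a < b -> (forall c, a <= c <= b -> D f c (f' c)) ->
  (forall c, a < c < b -> 0 < f' c) -> f a < f b.
Proof.
  intros Hab Hd Hp.
  destruct (MVT_cor2 f f' a b) as [c [Hc1 Hc2]]; [lra|auto|].
  assert (0 < f' c * (b - a)) by (apply Rmult_lt_0_compat; [apply Hp; auto|lra]). lra.
Qed.

Lemma mvt_ge f f' a b : a <= b -> (forall c, a <= c <= b -> D f c (f' c)) ->
  (forall c, a < c < b -> f' c <= 0) -> f b <= f a.
Proof.
  intros Hab Hd Hp.
  assert (- f a <= - f b); [|lra].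
  apply (mvt_le (fun y => - f y) (fun y => - f' y)); auto.
  intros c Hc. apply derivable_pt_lim_opp with (f := f). auto.
  intros c Hc. specialize (Hp c Hc). lra.
Qed.

Lemma mvt_gt f f' a b : a < b -> (forall c, a <= c <= b -> D f c (f' c)) ->
  (forall c, a < c < b -> f' c < 0) -> f b < f a.
Proof.
  intros Hab Hd Hp.
  assert (- f a < - f b); [|lra].
  apply (mvt_lt (fun y => - f y) (fun y => - f' y)); auto.
  intros c Hc. apply derivable_pt_lim_opp with (f := f). auto.
  intros c Hc. specialize (Hp c Hc). lra.
Qed.

Lemma mvt_eq f a b : a <= b -> (forall c, a <= c <= b -> D f c 0) -> f a = f b.
Proof.
  intros Hab Hd. apply Rle_antisym.
  apply (mvt_le f (fun _ => 0)); auto; intros; lra.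
  apply (mvt_ge f (fun _ => 0)); auto; intros; lra.
Qed.

Lemma dsign_right f x l d : 0 < d -> D f x l -> (forall y, x < y < x + d -> f x <= f y) -> 0 <= l.
Proof.
  intros Hd Hf Hy. destruct (Rle_lt_dec 0 l) as [|Hl]; auto. exfalso.
  destruct (Hf (-l/2)) as [del Hdel]; [lra|].
  set (h := Rmin del d / 2).
  assert (Hm : 0 < Rmin del d) by (apply Rmin_pos; [apply cond_pos|lra]).
  assert (Hh0 : 0 < h) by (unfold h; lra).
  assert (Hh1 : h < del) by (unfold h; assert (Rmin del d <= del) by apply Rmin_l; lra).
  assert (Hh2 : h < d) by (unfold h; assert (Rmin del d <= d) by apply Rmin_r; lra).
  specialize (Hdel h). assert (Hq := Hy (x + h) ltac:(lra)).
  assert (h <> 0) by lra.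
  assert (Rabs h < del) by (rewrite Rabs_right; lra).
  specialize (Hdel H H0). apply Rabs_def2 in Hdel.
  assert (0 <= (f (x + h) - f x) / h) by (apply Rdiv_le_0_compat; lra). lra.
Qed.

Lemma dcont f x l : D f x l -> continuity_pt f x.
Proof. intros H. apply derivable_continuous_pt. exists l. auto. Qed.

Lemma first_zero f z b : (forall x, continuity_pt f x) -> z < b -> f z = 0 -> f b <> 0 ->
  exists x, z <= x < b /\ f x = 0 /\ forall y, x < y <= b -> f y <> 0.
Proof.
  intros Hc Hzb Hz Hb.
  set (E := fun y => z <= y <= b /\ f y = 0).
  assert (HB : bound E) by (exists b; intros y [Hy _]; lra).
  assert (HE : exists y, E y) by (exists z; split; [lra|auto]).
  destruct (completeness E HB HE) as [m [Hub Hlub]].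
  assert (Hzm : z <= m) by (apply Hub; split; [lra|auto]).
  assert (Hmb : m <= b) by (apply Hlub; intros y [Hy _]; lra).
  assert (Hfm : f m = 0).
  { destruct (Req_dec (f m) 0) as [|Hne]; auto. exfalso.
    destruct (Hc m (Rabs (f m))) as [alp [Ha Hal]]. apply Rabs_pos_lt; auto.
    assert (Hnot : ~ (forall y, E y -> y <= m - alp)).
    { intros Hall. assert (m <= m - alp) by (apply Hlub; auto). lra. }
    apply not_all_ex_not in Hnot. destruct Hnot as [y Hy].
    apply imply_to_and in Hy. destruct Hy as [Ey Hy]. 
    assert (y <= m) by (apply Hub; auto).
    destruct Ey as [_ Hfy].
    destruct (Req_dec y m) as [->|Hym]; [congruence|].
    assert (Hd : D_x no_cond m y /\ R_dist y m < alp).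
    { split. split; [constructor| auto]. unfold R_dist. rewrite Rabs_left; lra. }
    specialize (Hal y Hd). simpl in Hal. unfold R_dist in Hal. rewrite Hfy in Hal.
    rewrite Rminus_0_l, Rabs_Ropp in Hal. lra. }
  exists m. split; [split; auto|]. destruct (Req_dec m b) as [->|]; [congruence|lra].
  split; auto. intros y Hy Hfy. assert (y <= m) by (apply Hub; split; [lra|auto]). lra.
Qed.

Lemma ln_le_sub1 y : 0 < y -> ln y <= y - 1.
Proof. intros. pose proof (exp_ineq1_le (ln y)). rewrite exp_ln in H0; auto. lra. Qed.

Lemma ln_pos_ge1 x : 1 <= x -> 0 <= ln x.
Proof. intros. destruct (Req_dec x 1) as [->|]. rewrite ln_1; lra.
  left. rewrite <- ln_1. apply ln_increasing; lra. Qed.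

Lemma ln_le_2sqrt x : 0 < x -> ln x <= 2 * sqrt x.
Proof.
  intros Hx. assert (Hs : 0 < sqrt x) by (apply sqrt_lt_R0; auto).
  replace x with (sqrt x * sqrt x) at 1 by (apply sqrt_sqrt; lra).
  rewrite ln_mult; auto. pose proof (ln_le_sub1 _ Hs). lra.
Qed.

Lemma lin_beats_log c K C L : 0 < c -> exists x, L < x /\ 1 <= x /\ K * ln x + C < c * x.
Proof.
  intros Hc. set (r := 1 + Rabs L + (2 * Rabs K + Rabs C + 1) / c).
  assert (HL := Rle_abs L). assert (HK := Rabs_pos K). assert (HC := Rle_abs C).
  assert (HC' := Rabs_pos C).
  assert (Hq : 0 <= (2 * Rabs K + Rabs C + 1) / c) by (apply Rdiv_le_0_compat; lra).
  assert (Hr1 : 1 <= r) by (unfold r; pose proof (Rabs_pos L); lra).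
  exists (r * r). assert (Hsq : sqrt (r * r) = r) by (apply sqrt_square; lra).
  assert (L < r) by (unfold r; lra).
  split; [nra|]. split; [nra|].
  assert (Hln := ln_le_2sqrt (r * r) ltac:(nra)). rewrite Hsq in Hln.
  assert (Hl0 := ln_pos_ge1 (r*r) ltac:(nra)).
  assert (K * ln (r * r) <= 2 * Rabs K * r).
  { destruct (Rle_lt_dec 0 K). rewrite Rabs_right by lra. nra.
    rewrite Rabs_left by lra. nra. }
  assert (c * r >= 2 * Rabs K + Rabs C + 1).
  { unfold r. replace (c * (1 + Rabs L + (2 * Rabs K + Rabs C + 1) / c)) with
      (c * (1 + Rabs L) + (2 * Rabs K + Rabs C + 1)) by (field; lra).
    pose proof (Rabs_pos L). nra. }
  nra.
Qed.

Lemma Rabs_bnd x : - Rabs x <= x <= Rabs x.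
Proof. unfold Rabs; destruct Rcase_abs; lra. Qed.

Lemma Rabs_le_inv a b : Rabs a <= b -> - b <= a <= b.
Proof. pose proof (Rabs_bnd a). lra. Qed.


Definition ODE k H H1 H2 := (forall x, D H x (H1 x)) /\ (forall x, D H1 x (H2 x)) /\
  (forall x, H2 x - x * H1 x + k * H x = 0).

Lemma asy_bounds k H : hermite_asymp k H ->
  exists A, 0 < A /\ forall x, A < x -> Rpower x k / 2 < H x < 3 * Rpower x k / 2.
Proof.
  intros Ha. destruct (Ha (1/2)) as [A HA]; [lra|].
  exists (Rabs A + 1). split. pose proof (Rabs_pos A); lra.
  intros x Hx. assert (HA' : A < x) by (pose proof (Rle_abs A); lra).
  assert (Hx0 : 0 < x) by (pose proof (Rabs_pos A); lra).
  specialize (HA x HA' Hx0). apply Rabs_def2 in HA.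
  assert (Hp : 0 < Rpower x k) by (unfold Rpower; apply exp_pos).
  destruct HA as [H1 H2].
  assert (E : H x = (H x / Rpower x k) * Rpower x k) by (field; lra).
  split; rewrite E; nra.
Qed.

Lemma asy_pos k H : hermite_asymp k H -> exists A, 0 < A /\ forall x, A < x -> 0 < H x.
Proof.
  intros Ha. destruct (asy_bounds k H Ha) as [A [HA0 HA]]. exists A. split; auto.
  intros x Hx. specialize (HA x Hx).
  assert (0 < Rpower x k) by (unfold Rpower; apply exp_pos). lra.
Qed.

Lemma asy_grow k H a c m : hermite_asymp k H -> 0 < c -> 0 < m ->
  (forall x, a <= x -> m * exp (c * x) <= H x) -> False.
Proof.
  intros Ha Hc Hm Hg. destruct (asy_bounds k H Ha) as [A [HA0 HA]].
  destruct (lin_beats_log c k (ln (3/2) - ln m) (Rmax A a) Hc) as [x [Hx1 [Hx2 Hx3]]].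
  assert (A < x) by (pose proof (Rmax_l A a); lra).
  assert (a <= x) by (pose proof (Rmax_r A a); lra).
  specialize (HA x H0). specialize (Hg x H1).
  assert (exp (k * ln x + ln (3/2)) < exp (ln m + c * x)) by (apply exp_increasing; lra).
  rewrite !exp_plus, !exp_ln in H2 by lra. unfold Rpower in HA. lra.
Qed.

Lemma asy_decay k H a c M : hermite_asymp k H -> 0 < c ->
  (forall x, a <= x -> H x <= M * exp (- c * x)) -> False.
Proof.
  intros Ha Hc Hg. destruct (asy_bounds k H Ha) as [A [HA0 HA]].
  set (M' := Rmax M 1). assert (HM : 1 <= M') by apply Rmax_r.
  assert (HM2 : M <= M') by apply Rmax_l.
  destruct (lin_beats_log c (-k) (ln M' - ln (1/2)) (Rmax A a) Hc) as [x [Hx1 [Hx2 Hx3]]].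
  assert (A < x) by (pose proof (Rmax_l A a); lra).
  assert (a <= x) by (pose proof (Rmax_r A a); lra).
  specialize (HA x H0). specialize (Hg x H1).
  assert (exp (ln M' - c * x) < exp (ln (1/2) + k * ln x)) by (apply exp_increasing; lra).
  unfold Rminus in H2. rewrite !exp_plus, !exp_ln in H2 by lra. unfold Rpower in HA.
  replace (- (c * x)) with (- c * x) in H2 by ring.
  assert (M * exp (- c * x) <= M' * exp (- c * x)) by (apply Rmult_le_compat_r; [left; apply exp_pos|auto]).
  lra.
Qed.

Lemma asy_bdd k H a M : hermite_asymp k H -> 0 < k -> (forall x, a <= x -> H x <= M) -> False.
Proof.
  intros Ha Hk Hg. destruct (asy_bounds k H Ha) as [A [HA0 HA]].
  set (M' := Rmax M 1). assert (HM : 1 <= M') by apply Rmax_r.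
  assert (HM2 : M <= M') by apply Rmax_l.
  set (y := (ln (2 * M') + 1) / k + Rabs A + Rabs a + 1).
  assert (Hl : 0 <= ln (2 * M')) by (apply ln_pos_ge1; lra).
  assert (Hy1 : (ln (2 * M') + 1) / k > 0) by (apply Rdiv_lt_0_compat; lra).
  pose proof (Rle_abs A). pose proof (Rle_abs a).
  assert (He := exp_ineq1_le y).
  pose proof (Rabs_pos a); pose proof (Rabs_pos A).
  assert (HyA : A < exp y) by (unfold y in *; lra). assert (Hya : a <= exp y) by (unfold y in *; lra).
  specialize (HA _ HyA). specialize (Hg _ Hya). unfold Rpower in HA. rewrite ln_exp in HA.
  assert (Hky : k * y > ln (2 * M')).
  { unfold y. replace (k * ((ln (2 * M') + 1) / k + Rabs A + Rabs a + 1)) with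
     (ln (2 * M') + 1 + k * (Rabs A + Rabs a + 1)) by (field; lra).
    nra. }
  assert (He2 : exp (ln (2 * M')) < exp (k * y)) by (apply exp_increasing; lra).
  rewrite exp_ln in He2 by lra. lra.
Qed.

Lemma asy_low k H a m : hermite_asymp k H -> k < 0 -> 0 < m -> (forall x, a <= x -> m <= H x) -> False.
Proof.
  intros Ha Hk Hm Hg. destruct (asy_bounds k H Ha) as [A [HA0 HA]].
  set (L := ln (2 * m / 3)).
  set (y := (Rabs L + 1) / (- k) + Rabs A + Rabs a + 1).
  assert (Hy1 : (Rabs L + 1) / (- k) > 0) by (apply Rdiv_lt_0_compat; pose proof (Rabs_pos L); lra).
  pose proof (Rle_abs A). pose proof (Rle_abs a). pose proof (Rle_abs (- L)) as HL.
  rewrite Rabs_Ropp in HL.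
  assert (He := exp_ineq1_le y).
  pose proof (Rabs_pos a); pose proof (Rabs_pos A).
  assert (HyA : A < exp y) by (unfold y in *; lra). assert (Hya : a <= exp y) by (unfold y in *; lra).
  specialize (HA _ HyA). specialize (Hg _ Hya). unfold Rpower in HA. rewrite ln_exp in HA.
  assert (Hky : k * y < L).
  { unfold y. replace (k * ((Rabs L + 1) / (- k) + Rabs A + Rabs a + 1)) with
     (- (Rabs L + 1) + k * (Rabs A + Rabs a + 1)) by (field; lra).
    nra. }
  assert (He2 : exp (k * y) < exp L) by (apply exp_increasing; lra).
  unfold L in He2. rewrite exp_ln in He2 by lra. lra.
Qed.

Lemma grow_from H H1 a c : (forall x, D H x (H1 x)) ->
  (forall x, a <= x -> c * H x <= H1 x) ->
  forall x, a <= x -> H a * exp (- c * a) * exp (c * x) <= H x.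
Proof.
  intros Hd Hb x Hx.
  assert (H a * exp (- c * a) <= H x * exp (- c * x)).
  { apply (mvt_le (fun y => H y * exp (- c * y))
       (fun y => H1 y * exp (- c * y) + H y * (exp (- c * y) * (- c)))); auto.
    - intros y Hy. eapply deq. eapply dmul; auto.
      eapply dexp. eapply dmul. apply dconst. apply did. cbv beta; ring.
    - intros y Hy. specialize (Hb y ltac:(lra)).
      assert (0 < exp (- c * y)) by apply exp_pos. nra. }
  assert (E : exp (- c * x) * exp (c * x) = 1).
  { rewrite <- exp_plus. replace (- c * x + c * x) with 0 by ring. apply exp_0. }
  assert (0 < exp (c * x)) by apply exp_pos.
  replace (H x) with (H x * exp (- c * x) * exp (c * x)) by (rewrite Rmult_assoc, E; ring).
  nra.
Qed.

Lemma decay_from H H1 a c : (forall x, D H x (H1 x)) ->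
  (forall x, a <= x -> H1 x <= - c * H x) ->
  forall x, a <= x -> H x <= H a * exp (c * a) * exp (- c * x).
Proof.
  intros Hd Hb x Hx.
  assert (H x * exp (c * x) <= H a * exp (c * a)).
  { apply (mvt_ge (fun y => H y * exp (c * y))
       (fun y => H1 y * exp (c * y) + H y * (exp (c * y) * c))); auto.
    - intros y Hy. eapply deq. eapply dmul; auto.
      eapply dexp. eapply dmul. apply dconst. apply did. cbv beta; ring.
    - intros y Hy. specialize (Hb y ltac:(lra)).
      assert (0 < exp (c * y)) by apply exp_pos. nra. }
  assert (E : exp (c * x) * exp (- c * x) = 1).
  { rewrite <- exp_plus. replace (c * x + - c * x) with 0 by ring. apply exp_0. }
  assert (0 < exp (- c * x)) by apply exp_pos.
  replace (H x) with (H x * exp (c * x) * exp (- c * x)) by (rewrite Rmult_assoc, E; ring).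
  nra.
Qed.

Lemma dgauss x : D (fun y => exp (- (y * y) / 2)) x (exp (- (x * x) / 2) * (- x)).
Proof.
  eapply deq. eapply dexp. eapply deq. eapply (dmul (fun y => - (y * y)) (fun _ => / 2)).
  eapply deq. apply derivable_pt_lim_opp. eapply dmul; apply did. reflexivity. apply dconst.
  reflexivity. cbv beta. field.
Qed.

Lemma dpsi k H H1 H2 : ODE k H H1 H2 -> forall x,
  D (fun y => H1 y * exp (- (y * y) / 2)) x (- k * H x * exp (- (x * x) / 2)).
Proof.
  intros [Hd [Hd1 Ho]] x. eapply deq. eapply dmul. apply Hd1. apply dgauss.
  specialize (Ho x). cbv beta. replace (H2 x) with (x * H1 x - k * H x) by lra. ring.
Qed.

Lemma cont_of k H H1 H2 : ODE k H H1 H2 -> continuity H.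
Proof. intros [Hd _] x. apply (dcont H x (H1 x)); auto. Qed.

Lemma km_props k H H1 H2 : ODE k H H1 H2 -> hermite_asymp k H -> k < 0 ->
  forall x, 0 < H x /\ H1 x < 0.
Proof.
  intros Hode Ha Hk. pose proof Hode as [Hd [Hd1 Ho]].
  destruct (asy_pos k H Ha) as [A [HA0 HA]].
  assert (Hpsi := dpsi k H H1 H2 Hode).
  assert (S1 : forall x0, (forall y, x0 <= y -> 0 < H y) -> H1 x0 < 0).
  { intros x0 Hpos. destruct (Rlt_le_dec (H1 x0) 0) as [|Hge]; auto. exfalso.
    assert (Hinc : forall y, x0 < y -> 0 < H1 y).
    { intros y Hy.
      assert (H1 x0 * exp (- (x0 * x0) / 2) < H1 y * exp (- (y * y) / 2)).
      { apply (mvt_lt (fun y => H1 y * exp (- (y * y) / 2)) (fun y => - k * H y * exp (- (y * y) / 2))); auto.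
        intros c Hc. assert (0 < H c) by (apply Hpos; lra).
        assert (0 < exp (- (c * c) / 2)) by apply exp_pos.
        assert (0 < - k * H c) by nra. nra. }
      assert (0 < exp (- (y * y) / 2)) by apply exp_pos.
      assert (0 <= H1 x0 * exp (- (x0 * x0) / 2)) by (assert (0 < exp (- (x0 * x0) / 2)) by apply exp_pos; nra).
      nra. }
    apply (asy_low k H (x0 + 1) (H (x0 + 1)) Ha Hk); [apply Hpos; lra|].
    intros x Hx. apply (mvt_le H H1); auto. intros c Hc. left. apply Hinc. lra. }
  assert (S2 : forall x, 0 < H x).
  { intros z. destruct (Rlt_le_dec 0 (H z)) as [|Hz]; auto. exfalso.
    set (b := Rmax z A + 1).
    assert (Hzb : z < b) by (unfold b; pose proof (Rmax_l z A); lra).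
    assert (HAb : A < b) by (unfold b; pose proof (Rmax_r z A); lra).
    assert (Hb : 0 < H b) by (apply HA; lra).
    assert (Hcont := cont_of k H H1 H2 Hode).
    assert (Hz0 : exists z0, z0 < b /\ H z0 = 0).
    { destruct Hz as [Hz|Hz].
      - destruct (IVT H z b Hcont Hzb Hz Hb) as [z0 [Hz0 Hz1]].
        exists z0. split; auto. destruct Hz0 as [_ [|]]; auto. subst; lra.
      - exists z; split; auto. }
    destruct Hz0 as [z0 [Hz0b Hz0]].
    destruct (first_zero H z0 b Hcont Hz0b Hz0 ltac:(lra)) as [x [Hx1 [Hx2 Hx3]]].
    assert (Hposx : forall y, x < y <= b -> 0 < H y).
    { intros y Hy. destruct (Rlt_le_dec 0 (H y)) as [|Hy2]; auto. exfalso.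
      destruct Hy2 as [Hy2|Hy2]; [|apply (Hx3 y); auto].
      destruct (Rlt_le_dec y b) as [Hyb|Hyb]; [|assert (y = b) by lra; subst; lra].
      destruct (IVT H y b Hcont Hyb Hy2 Hb) as [w [Hw1 Hw2]].
      apply (Hx3 w); auto. lra. }
    assert (HH1x : 0 <= H1 x).
    { apply (dsign_right H x (H1 x) (b - x)); auto. lra.
      intros y Hy. rewrite Hx2. left. apply Hposx. lra. }
    assert (HH1b : H1 b < 0).
    { apply S1. intros y Hy. apply HA. lra. }
    assert (H1 x * exp (- (x * x) / 2) < H1 b * exp (- (b * b) / 2)).
    { apply (mvt_lt (fun y => H1 y * exp (- (y * y) / 2)) (fun y => - k * H y * exp (- (y * y) / 2))); auto. lra.
      intros c Hc. assert (0 < H c) by (apply Hposx; lra).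
      assert (0 < exp (- (c * c) / 2)) by apply exp_pos.
      assert (0 < - k * H c) by nra. nra. }
    assert (0 < exp (- (b * b) / 2)) by apply exp_pos.
    assert (0 < exp (- (x * x) / 2)) by apply exp_pos.
    nra. }
  intros x. split; auto.
Qed.

Definition dom (H : R -> R) q := forall z, H z = 0 -> z < q.

Lemma kp_props k H H1 H2 : ODE k H H1 H2 -> hermite_asymp k H -> 0 < k ->
  forall q, dom H q -> 0 < H q /\ 0 < H1 q.
Proof.
  intros Hode Ha Hk. pose proof Hode as [Hd [Hd1 Ho]].
  destruct (asy_pos k H Ha) as [A [HA0 HA]].
  assert (Hpsi := dpsi k H H1 H2 Hode).
  assert (Hcont := cont_of k H H1 H2 Hode).
  assert (Hp : forall q, dom H q -> 0 < H q).
  { intros q Hq. destruct (Rlt_le_dec 0 (H q)) as [|Hz]; auto. exfalso.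
    destruct Hz as [Hz|Hz]; [|specialize (Hq q Hz); lra].
    set (b := Rmax q A + 1).
    assert (Hzb : q < b) by (unfold b; pose proof (Rmax_l q A); lra).
    assert (HAb : A < b) by (unfold b; pose proof (Rmax_r q A); lra).
    destruct (IVT H q b Hcont Hzb Hz (HA b HAb)) as [z0 [Hz0 Hz1]].
    specialize (Hq z0 Hz1). lra. }
  intros q Hq. split; auto.
  destruct (Rlt_le_dec 0 (H1 q)) as [|Hge]; auto. exfalso.
  assert (Hdq : forall y, q <= y -> dom H y) by (intros y Hy z Hz; specialize (Hq z Hz); lra).
  assert (Hdec : forall y, q < y -> H1 y < 0).
  { intros y Hy.
    assert (H1 y * exp (- (y * y) / 2) < H1 q * exp (- (q * q) / 2)).
    { apply (mvt_gt (fun y => H1 y * exp (- (y * y) / 2)) (fun y => - k * H y * exp (- (y * y) / 2))); auto.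
      intros c Hc. assert (0 < H c) by (apply Hp, Hdq; lra).
      assert (0 < exp (- (c * c) / 2)) by apply exp_pos.
      assert (0 < k * H c) by nra. nra. }
    assert (0 < exp (- (y * y) / 2)) by apply exp_pos.
    assert (H1 q * exp (- (q * q) / 2) <= 0) by (assert (0 < exp (- (q * q) / 2)) by apply exp_pos; nra).
    nra. }
  apply (asy_bdd k H q (H q) Ha Hk).
  intros x Hx. apply (mvt_ge H H1); auto. intros c Hc. left. apply Hdec. lra.
Qed.

Definition sg (k : R) := if Rlt_dec 0 k then 1 else -1.

Lemma sg_sq k : sg k * sg k = 1.
Proof. unfold sg; destruct Rlt_dec; ring. Qed.

Lemma dom_props k H H1 H2 : ODE k H H1 H2 -> hermite_asymp k H -> k <> 0 ->
  forall q, in_dom k H q -> 0 < H q /\ 0 < sg k * H1 q.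
Proof.
  intros Hode Ha Hk q. unfold in_dom, sg. destruct Rlt_dec as [Hk'|Hk'].
  - intros Hq. destruct (kp_props k H H1 H2 Hode Ha Hk' q Hq). split; lra.
  - intros _. destruct (km_props k H H1 H2 Hode Ha ltac:(lra) q). split; lra.
Qed.

Lemma dom_up k H q y : in_dom k H q -> q <= y -> in_dom k H y.
Proof. unfold in_dom. destruct Rlt_dec; auto. intros Hq Hy z Hz. specialize (Hq z Hz). lra. Qed.

Lemma dom_ex k H : hermite_asymp k H -> exists a, in_dom k H a.
Proof.
  intros Ha. destruct (asy_pos k H Ha) as [A [HA0 HA]]. exists (A + 1).
  unfold in_dom. destruct Rlt_dec; auto. intros z Hz.
  destruct (Rlt_le_dec z (A + 1)); auto. specialize (HA z ltac:(lra)). lra.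
Qed.

Definition uf H H1 (q : R) := H1 q / H q.
Definition wf k H H1 (q : R) := q * uf H H1 q - k - (uf H H1 q) ^ 2.

Lemma du k H H1 H2 : ODE k H H1 H2 -> forall q, H q <> 0 -> D (uf H H1) q (wf k H H1 q).
Proof.
  intros [Hd [Hd1 Ho]] q Hq. unfold uf, wf.
  eapply deq. apply derivable_pt_lim_div; auto.
  specialize (Ho q). replace (H2 q) with (q * H1 q - k * H q) by lra.
  unfold Rsqr, uf. simpl. field. auto.
Qed.

Lemma no_sgu_lower k H H1 H2 a c : ODE k H H1 H2 -> hermite_asymp k H -> k <> 0 ->
  in_dom k H a -> 0 < c -> (forall y, a <= y -> c <= sg k * uf H H1 y) -> False.
Proof.
  intros Hode Ha Hk Hda Hc Hb. pose proof Hode as [Hd [Hd1 Ho]].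
  assert (HP : forall y, a <= y -> 0 < H y) by
    (intros y Hy; apply (dom_props k H H1 H2 Hode Ha Hk y (dom_up k H a y Hda Hy))).
  assert (Hpa := HP a ltac:(lra)).
  unfold sg, uf in Hb. destruct (Rlt_dec 0 k).
  - assert (Hg := grow_from H H1 a c Hd).
    apply (asy_grow k H a c (H a * exp (- c * a)) Ha Hc).
    assert (0 < exp (- c * a)) by apply exp_pos. nra.
    apply Hg. intros x Hx. specialize (Hb x Hx). specialize (HP x Hx).
    replace (H1 x) with (H1 x / H x * H x) by (field; lra). nra.
  - assert (Hg := decay_from H H1 a c Hd).
    apply (asy_decay k H a c (H a * exp (c * a)) Ha Hc).
    apply Hg. intros x Hx. specialize (Hb x Hx). specialize (HP x Hx).
    replace (H1 x) with (H1 x / H x * H x) by (field; lra). nra.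
Qed.

Definition chi k H H1 (q : R) := exp (- (q * q) / 2) * (q * H q * H1 q - k * (H q * H q) - H1 q * H1 q).

Lemma dchi k H H1 H2 : ODE k H H1 H2 -> forall q,
  D (chi k H H1) q (exp (- (q * q) / 2) * H q * H1 q).
Proof.
  intros Hode q. pose proof Hode as [Hd [Hd1 Ho]]. unfold chi.
  eapply deq. eapply dmul. apply dgauss.
  eapply dminus. eapply dminus. eapply dmul. eapply dmul. apply did. apply Hd. apply Hd1.
  eapply dmul. apply dconst. eapply dmul; apply Hd.
  eapply dmul; apply Hd1.
  cbv beta. specialize (Ho q). replace (H2 q) with (q * H1 q - k * H q) by lra.
  simpl. ring.
Qed.

Lemma chi_w k H H1 q : H q <> 0 -> chi k H H1 q = exp (- (q * q) / 2) * (H q * H q) * wf k H H1 q.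
Proof. intros. unfold chi, wf, uf. field. auto. Qed.

Lemma sgu_pos k H H1 H2 : ODE k H H1 H2 -> hermite_asymp k H -> k <> 0 ->
  forall q, in_dom k H q -> 0 < sg k * uf H H1 q.
Proof.
  intros Hode Ha Hk q Hq. destruct (dom_props k H H1 H2 Hode Ha Hk q Hq).
  unfold uf. replace (sg k * (H1 q / H q)) with (sg k * H1 q / H q) by (field; lra).
  apply Rdiv_lt_0_compat; auto.
Qed.

Lemma dsgu k H H1 H2 : ODE k H H1 H2 -> hermite_asymp k H -> k <> 0 ->
  forall q, in_dom k H q -> D (fun y => sg k * uf H H1 y) q (sg k * wf k H H1 q).
Proof.
  intros Hode Ha Hk q Hq. destruct (dom_props k H H1 H2 Hode Ha Hk q Hq).
  eapply deq. eapply dmul. apply dconst. apply (du k H H1 H2); auto; lra. cbv beta. ring.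
Qed.

Lemma sgw_neg k H H1 H2 : ODE k H H1 H2 -> hermite_asymp k H -> k <> 0 ->
  forall q, in_dom k H q -> sg k * wf k H H1 q < 0.
Proof.
  intros Hode Ha Hk q Hq.
  destruct (Rlt_le_dec (sg k * wf k H H1 q) 0) as [|Hge]; auto. exfalso.
  assert (Hdm : forall y, q <= y -> in_dom k H y) by (intros; eapply dom_up; eauto).
  assert (HP : forall y, q <= y -> 0 < H y /\ 0 < sg k * H1 y) by
    (intros; apply (dom_props k H H1 H2 Hode Ha Hk); auto).
  assert (Hchi : forall y, q < y -> 0 < sg k * wf k H H1 y).
  { intros y Hy.
    assert (sg k * chi k H H1 q < sg k * chi k H H1 y).
    { apply (mvt_lt (fun y => sg k * chi k H H1 y)
              (fun y => sg k * (exp (- (y * y) / 2) * H y * H1 y))); auto.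
      - intros c Hc. eapply deq. eapply dmul. apply dconst. apply (dchi k H H1 H2 Hode).
        cbv beta; ring.
      - intros c Hc. destruct (HP c ltac:(lra)).
        assert (0 < exp (- (c * c) / 2)) by apply exp_pos.
        replace (sg k * (exp (- (c * c) / 2) * H c * H1 c)) with
          (exp (- (c * c) / 2) * H c * (sg k * H1 c)) by ring.
        apply Rmult_lt_0_compat; auto. apply Rmult_lt_0_compat; auto. }
    destruct (HP q ltac:(lra)) as [Hq0 _]. destruct (HP y ltac:(lra)) as [Hy0 _].
    rewrite !chi_w in H0 by lra.
    assert (0 < exp (- (q * q) / 2)) by apply exp_pos.
    assert (0 < exp (- (y * y) / 2)) by apply exp_pos.
    assert (0 <= sg k * (exp (- (q * q) / 2) * (H q * H q) * wf k H H1 q)).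
    { replace (sg k * (exp (- (q * q) / 2) * (H q * H q) * wf k H H1 q)) with
        (exp (- (q * q) / 2) * (H q * H q) * (sg k * wf k H H1 q)) by ring.
      apply Rmult_le_pos; auto. apply Rmult_le_pos; nra. }
    replace (sg k * (exp (- (y * y) / 2) * (H y * H y) * wf k H H1 y)) with
        (exp (- (y * y) / 2) * (H y * H y) * (sg k * wf k H H1 y)) in H0 by ring.
    assert (0 < exp (- (y * y) / 2) * (H y * H y)) by (apply Rmult_lt_0_compat; nra).
    nra. }
  apply (no_sgu_lower k H H1 H2 (q + 1) (sg k * uf H H1 (q + 1)) Hode Ha Hk).
  apply Hdm; lra. apply (sgu_pos k H H1 H2); auto. apply Hdm; lra.
  intros y Hy. apply (mvt_le (fun y => sg k * uf H H1 y) (fun y => sg k * wf k H H1 y)); auto.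
  intros c Hc. apply (dsgu k H H1 H2); auto. apply Hdm; lra.
  intros c Hc. left. apply Hchi. lra.
Qed.

Lemma sgu_decr k H H1 H2 : ODE k H H1 H2 -> hermite_asymp k H -> k <> 0 ->
  forall q1 q2, in_dom k H q1 -> q1 < q2 -> sg k * uf H H1 q2 < sg k * uf H H1 q1.
Proof.
  intros Hode Ha Hk q1 q2 Hq1 Hq.
  apply (mvt_gt (fun y => sg k * uf H H1 y) (fun y => sg k * wf k H H1 y)); auto.
  intros c Hc. apply (dsgu k H H1 H2); auto. eapply dom_up; eauto; lra.
  intros c Hc. apply (sgw_neg k H H1 H2); auto. eapply dom_up; eauto; lra.
Qed.

Lemma sgu_small k H H1 H2 : ODE k H H1 H2 -> hermite_asymp k H -> k <> 0 ->
  forall t, 0 < t -> exists q, in_dom k H q /\ sg k * uf H H1 q < t.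
Proof.
  intros Hode Ha Hk t Ht. destruct (dom_ex k H Ha) as [a Hda].
  apply NNPP. intros Hn.
  apply (no_sgu_lower k H H1 H2 a t Hode Ha Hk Hda Ht).
  intros y Hy. destruct (Rle_lt_dec t (sg k * uf H H1 y)); auto.
  exfalso. apply Hn. exists y. split; auto. eapply dom_up; eauto.
Qed.

Lemma sg_pos k : 0 < k -> sg k = 1.
Proof. unfold sg; destruct Rlt_dec; lra. Qed.
Lemma sg_neg k : k < 0 -> sg k = -1.
Proof. unfold sg; destruct Rlt_dec; lra. Qed.
Lemma in_dom_neg k H q : k < 0 -> in_dom k H q.
Proof. unfold in_dom; destruct Rlt_dec; auto; lra. Qed.
Lemma in_dom_pos k H q : 0 < k -> in_dom k H q = dom H q.
Proof. unfold in_dom; destruct Rlt_dec; auto; lra. Qed.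

Lemma sgu_large k H H1 H2 : ODE k H H1 H2 -> hermite_asymp k H -> k <> 0 ->
  forall t, 0 < t -> exists q, in_dom k H q /\ t < sg k * uf H H1 q.
Proof.
  intros Hode Ha Hk t Ht. pose proof Hode as [Hd [Hd1 Ho]].
  apply NNPP. intros Hn.
  assert (Hb : forall q, in_dom k H q -> sg k * uf H H1 q <= t).
  { intros q Hq. destruct (Rle_lt_dec (sg k * uf H H1 q) t); auto. exfalso; apply Hn; eauto. }
  clear Hn.
  assert (Hcont := cont_of k H H1 H2 Hode).
  destruct (Rlt_dec 0 k) as [Hkp|Hkn].
  - rewrite sg_pos in Hb by auto.
    assert (Hnz : forall z, H z <> 0).
    { intros z Hz. destruct (asy_pos k H Ha) as [A [HA0 HA]].
      set (b := Rmax z A + 1).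
      assert (Hzb : z < b) by (unfold b; pose proof (Rmax_l z A); lra).
      assert (HAb : A < b) by (unfold b; pose proof (Rmax_r z A); lra).
      assert (Hbp : 0 < H b) by (apply HA; lra).
      destruct (first_zero H z b Hcont Hzb Hz ltac:(lra)) as [x [Hx1 [Hx2 Hx3]]].
      assert (Hposx : forall y, x < y <= b -> 0 < H y).
      { intros y Hy. destruct (Rlt_le_dec 0 (H y)) as [|Hy2]; auto. exfalso.
        destruct Hy2 as [Hy2|Hy2]; [|apply (Hx3 y); auto].
        destruct (Rlt_le_dec y b) as [Hyb|Hyb]; [|assert (y = b) by lra; subst; lra].
        destruct (IVT H y b Hcont Hyb Hy2 Hbp) as [w [Hw1 Hw2]].
        apply (Hx3 w); auto. lra. }
      assert (Hdy : forall y, x < y <= b -> in_dom k H y).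
      { intros y Hy. rewrite in_dom_pos by auto. intros z' Hz'.
        destruct (Rlt_le_dec z' y) as [|Hzy]; auto. exfalso.
        destruct (Rle_lt_dec z' b).
        - apply (Hx3 z'); auto; lra.
        - specialize (HA z' ltac:(lra)). lra. }
      set (m := H b * exp (- t * b) * exp (t * x)).
      assert (Hm : 0 < m) by (unfold m; assert (0 < exp (- t * b)) by apply exp_pos;
                              assert (0 < exp (t * x)) by apply exp_pos;
                              apply Rmult_lt_0_compat; [apply Rmult_lt_0_compat|]; auto).
      assert (Hlow : forall y, x < y <= b -> m <= H y).
      { intros y Hy.
        assert (H b * exp (- t * b) <= H y * exp (- t * y)).
        { apply (mvt_ge (fun y => H y * exp (- t * y))
            (fun y => H1 y * exp (- t * y) + H y * (exp (- t * y) * (- t)))); try lra.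
          - intros c Hc. eapply deq. eapply dmul; auto.
            eapply dexp. eapply dmul. apply dconst. apply did. cbv beta; ring.
          - intros c Hc. assert (Hdc := Hdy c ltac:(lra)). specialize (Hb c Hdc).
            assert (Hpc := Hposx c ltac:(lra)). unfold uf in Hb.
            assert (H1 c <= t * H c).
            { replace (H1 c) with (1 * (H1 c / H c) * H c) by (field; lra). nra. }
            assert (0 < exp (- t * c)) by apply exp_pos. nra. }
        assert (E : exp (- t * y) * exp (t * y) = 1).
        { rewrite <- exp_plus. replace (- t * y + t * y) with 0 by ring. apply exp_0. }
        assert (exp (t * x) <= exp (t * y)).
        { left; apply exp_increasing. nra. }
        assert (0 < exp (t * y)) by apply exp_pos.
        assert (0 < exp (- t * b)) by apply exp_pos.
        unfold m. replace (H y) with (H y * exp (- t * y) * exp (t * y)) by (rewrite Rmult_assoc, E; ring).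
        assert (0 <= H b * exp (- t * b)) by nra.
        apply Rmult_le_compat; [auto | left; apply exp_pos | lra | lra]. }
      destruct (Hcont x m Hm) as [alp [Halp Hal]].
      set (y := x + Rmin alp (b - x) / 2).
      assert (Hmin : 0 < Rmin alp (b - x)) by (apply Rmin_pos; lra).
      assert (Hy1 : x < y) by (unfold y; lra).
      assert (Hy2 : y <= b) by (unfold y; pose proof (Rmin_r alp (b - x)); lra).
      assert (Hy3 : y - x < alp) by (unfold y; pose proof (Rmin_l alp (b - x)); lra).
      assert (Hdd : D_x no_cond x y /\ R_dist y x < alp).
      { split. split; [constructor|lra]. unfold R_dist. rewrite Rabs_right; lra. }
      specialize (Hal y Hdd). simpl in Hal. unfold R_dist in Hal. rewrite Hx2 in Hal.
      rewrite Rminus_0_r in Hal. specialize (Hlow y ltac:(lra)).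
      apply Rabs_def2 in Hal. lra. }
    assert (Hall : forall q, in_dom k H q) by (intros q; rewrite in_dom_pos by auto; intros z Hz; exfalso; apply (Hnz z Hz)).
    assert (Hu : forall q, 0 < uf H H1 q).
    { intros q. pose proof (sgu_pos k H H1 H2 Hode Ha Hk q (Hall q)). rewrite sg_pos in H0; lra. }
    assert (Hw : forall q, wf k H H1 q < 0).
    { intros q. pose proof (sgw_neg k H H1 H2 Hode Ha Hk q (Hall q)). rewrite sg_pos in H0; lra. }
    set (q := - (t + 1) / k).
    assert (Hq : q < 0) by (unfold q; unfold Rdiv; assert (0 < / k) by (apply Rinv_0_lt_compat; auto); nra).
    assert (uf H H1 0 + k * 0 <= uf H H1 q + k * q).
    { apply (mvt_ge (fun y => uf H H1 y + k * y) (fun y => wf k H H1 y + k)); try lra.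
      - intros c Hc. eapply deq. eapply dplus. apply (du k H H1 H2); auto.
        eapply (dmul (fun _ => k) (fun y => y)). apply dconst. apply did. cbv beta; ring.
      - intros c Hc. unfold wf. specialize (Hu c). nra. }
    specialize (Hb q (Hall q)). specialize (Hu 0).
    assert (k * q = - (t + 1)) by (unfold q; field; lra). lra.
  - assert (Hkn' : k < 0) by lra. rewrite sg_neg in Hb by auto.
    assert (Hall : forall q, in_dom k H q) by (intros; apply in_dom_neg; auto).
    assert (Hu : forall q, uf H H1 q < 0).
    { intros q. pose proof (sgu_pos k H H1 H2 Hode Ha Hk q (Hall q)). rewrite sg_neg in H0; lra. }
    assert (Hw : forall q, 0 < wf k H H1 q).
    { intros q. pose proof (sgw_neg k H H1 H2 Hode Ha Hk q (Hall q)). rewrite sg_neg in H0; lra. }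
    assert (Hdu : forall q, D (uf H H1) q (wf k H H1 q)).
    { intros q. apply (du k H H1 H2); auto.
      destruct (dom_props k H H1 H2 Hode Ha Hk q (Hall q)); lra. }
    set (c0 := - uf H H1 0). assert (Hc0 : 0 < c0) by (unfold c0; specialize (Hu 0); lra).
    assert (Hle : forall q, q <= 0 -> uf H H1 q <= uf H H1 0).
    { intros q Hq. apply (mvt_le _ (wf k H H1)); auto. intros; left; auto. }
    set (Q := (1 + t * t) / c0).
    assert (HQ : 0 < Q) by (unfold Q; apply Rdiv_lt_0_compat; nra).
    assert (Hw1 : forall y, y <= - Q -> 1 <= wf k H H1 y).
    { intros y Hy. unfold wf.
      assert (Hb' := Hb y (Hall y)). specialize (Hle y ltac:(lra)). specialize (Hu y).
      assert (Hqc : Q * c0 = 1 + t * t) by (unfold Q; field; lra).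
      assert (y * uf H H1 y >= Q * c0) by (unfold c0 in *; nra).
      assert (uf H H1 y ^ 2 <= t * t) by nra. nra. }
    set (q := - Q - t - 1).
    assert (uf H H1 q - q <= uf H H1 (- Q) - (- Q)).
    { apply (mvt_le (fun y => uf H H1 y - y) (fun y => wf k H H1 y - 1)); try (unfold q; lra).
      - intros c Hc. eapply deq. eapply dminus. apply Hdu. apply did. reflexivity.
      - intros c Hc. specialize (Hw1 c ltac:(unfold q in *; lra)). lra. }
    specialize (Hb q (Hall q)). specialize (Hu (- Q)). unfold q in *. lra.
Qed.

Lemma q_exists k H H1 H2 : ODE k H H1 H2 -> hermite_asymp k H -> k <> 0 ->
  forall t, 0 < t -> exists q, in_dom k H q /\ sg k * uf H H1 q = t.
Proof.
  intros Hode Ha Hk t Ht.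
  destruct (sgu_large k H H1 H2 Hode Ha Hk t Ht) as [q1 [Hq1 Hq1t]].
  destruct (sgu_small k H H1 H2 Hode Ha Hk t Ht) as [q2 [Hq2 Hq2t]].
  assert (Hlt : q1 < q2).
  { destruct (Rlt_le_dec q1 q2) as [|Hle]; auto. exfalso. destruct Hle as [Hle|Hle].
    - pose proof (sgu_decr k H H1 H2 Hode Ha Hk q2 q1 Hq2 Hle). lra.
    - subst. lra. }
  destruct (f_interv_is_interv (fun y => - (sg k * uf H H1 y)) q1 q2 (- t) Hlt) as [q [Hq Hqe]].
  - split; lra.
  - intros x Hx. apply (dcont _ x (- (sg k * wf k H H1 x))). apply derivable_pt_lim_opp with (f := fun y => sg k * uf H H1 y). apply (dsgu k H H1 H2); auto.
    apply (dom_up k H q1); auto; lra.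
  - exists q. split. apply (dom_up k H q1); auto; lra. lra.
Qed.

Lemma q_unique k H H1 H2 : ODE k H H1 H2 -> hermite_asymp k H -> k <> 0 ->
  forall q1 q2, in_dom k H q1 -> in_dom k H q2 -> sg k * uf H H1 q1 = sg k * uf H H1 q2 -> q1 = q2.
Proof.
  intros Hode Ha Hk q1 q2 H1' H2' E.
  destruct (Rtotal_order q1 q2) as [Hl|[Hl|Hl]]; auto.
  - pose proof (sgu_decr k H H1 H2 Hode Ha Hk q1 q2 H1' Hl). lra.
  - pose proof (sgu_decr k H H1 H2 Hode Ha Hk q2 q1 H2' Hl). lra.
Qed.

Lemma abs_u k H H1 H2 : ODE k H H1 H2 -> hermite_asymp k H -> k <> 0 ->
  forall q, in_dom k H q -> Rabs (H1 q / H q) = sg k * uf H H1 q.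
Proof.
  intros Hode Ha Hk q Hq. pose proof (sgu_pos k H H1 H2 Hode Ha Hk q Hq). unfold uf in *.
  unfold sg in *. destruct Rlt_dec.
  - rewrite Rabs_right; lra.
  - rewrite Rabs_left; lra.
Qed.

Lemma u_to_0 k H H1 H2 : ODE k H H1 H2 -> hermite_asymp k H -> k <> 0 ->
  forall e, 0 < e -> exists X, forall x, X <= x -> in_dom k H x /\ Rabs (uf H H1 x) < e.
Proof.
  intros Hode Ha Hk e He.
  destruct (sgu_small k H H1 H2 Hode Ha Hk e He) as [q [Hq Hqe]].
  exists q. intros x Hx. assert (Hdx : in_dom k H x) by (eapply dom_up; eauto).
  split; auto.
  assert (sg k * uf H H1 x <= sg k * uf H H1 q).
  { destruct Hx as [Hx|Hx]. left; apply (sgu_decr k H H1 H2); auto. subst; lra. }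
  pose proof (sgu_pos k H H1 H2 Hode Ha Hk x Hdx).
  unfold sg in *; destruct Rlt_dec.
  - rewrite Rabs_right; lra.
  - rewrite Rabs_left; lra.
Qed.


Lemma energy_bound f f1 z k R : Rabs z <= R ->
  Rabs (2 * f * f1 + 2 * f1 * (z * f1 - k * f)) <= (1 + Rabs k + 2 * R) * (f * f + f1 * f1).
Proof.
  intros Hz. apply Rabs_le.
  assert (Hr : 0 <= R) by (pose proof (Rabs_pos z); lra).
  assert (Hz1 : - R <= z <= R) by (apply Rabs_le_inv; auto).
  assert (Ha : - Rabs k <= k <= Rabs k) by apply Rabs_bnd.
  assert (Hs1 : 0 <= (f - f1) * (f - f1)) by apply Rle_0_sqr.
  assert (Hs2 : 0 <= (f + f1) * (f + f1)) by apply Rle_0_sqr.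
  assert (Hf1 : 0 <= f1 * f1) by apply Rle_0_sqr. assert (Hf : 0 <= f * f) by apply Rle_0_sqr.
  assert (0 <= (Rabs k - k) * ((f + f1) * (f + f1))) by (apply Rmult_le_pos; lra).
  assert (0 <= (Rabs k + k) * ((f - f1) * (f - f1))) by (apply Rmult_le_pos; lra).
  assert (0 <= (R - z) * (f1 * f1)) by (apply Rmult_le_pos; lra).
  assert (0 <= (R + z) * (f1 * f1)) by (apply Rmult_le_pos; lra).
  assert (0 <= R * (f * f)) by (apply Rmult_le_pos; lra).
  assert (0 <= Rabs k * (f * f + f1 * f1)) by (apply Rmult_le_pos; [apply Rabs_pos|lra]).
  split; nra.
Qed.

Lemma ode_unique k f f1 f2 x0 : ODE k f f1 f2 -> f x0 = 0 -> f1 x0 = 0 -> forall y, f y = 0.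
Proof.
  intros [Hd [Hd1 Ho]] Hf0 Hf10 y.
  set (E := fun z => f z * f z + f1 z * f1 z).
  set (E' := fun z => 2 * f z * f1 z + 2 * f1 z * (z * f1 z - k * f z)).
  assert (HdE : forall z, D E z (E' z)).
  { intros z. unfold E, E'. eapply deq. eapply dplus; eapply dmul; eauto.
    cbv beta. specialize (Ho z). replace (f2 z) with (z * f1 z - k * f z) by lra. ring. }
  assert (HE0 : E x0 = 0) by (unfold E; rewrite Hf0, Hf10; ring).
  assert (HEpos : forall z, 0 <= E z) by (intros z; unfold E; nra).
  set (R := Rabs x0 + Rabs y). set (C := 1 + Rabs k + 2 * R).
  assert (HC : 0 < C) by (unfold C, R; pose proof (Rabs_pos k); pose proof (Rabs_pos x0); pose proof (Rabs_pos y); lra).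
  assert (Hb : forall z, Rabs z <= R -> Rabs (E' z) <= C * E z).
  { intros z Hz. unfold E', C, E. apply energy_bound; auto. }
  assert (Ey : E y = 0).
  { destruct (Rle_lt_dec x0 y) as [Hle|Hlt].
    - assert (E y * exp (- C * y) <= E x0 * exp (- C * x0)).
      { apply (mvt_ge (fun z => E z * exp (- C * z)) (fun z => E' z * exp (- C * z) + E z * (exp (- C * z) * (- C)))); auto.
        - intros c Hc. eapply deq. eapply dmul; auto.
          eapply dexp. eapply (dmul (fun _ => - C) (fun z => z)). apply dconst. apply did. cbv beta; ring.
        - intros c Hc. assert (Hcr : Rabs c <= R).
          { unfold R. apply Rabs_le. pose proof (Rabs_bnd x0). pose proof (Rabs_bnd y). lra. }
          specialize (Hb c Hcr). apply Rabs_le_inv in Hb. 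
          assert (0 < exp (- C * c)) by apply exp_pos. nra. }
      rewrite HE0 in H. assert (0 < exp (- C * y)) by apply exp_pos.
      specialize (HEpos y). nra.
    - assert (E y * exp (C * y) <= E x0 * exp (C * x0)).
      { apply (mvt_le (fun z => E z * exp (C * z)) (fun z => E' z * exp (C * z) + E z * (exp (C * z) * C))); try lra.
        - intros c Hc. eapply deq. eapply dmul; auto.
          eapply dexp. eapply (dmul (fun _ => C) (fun z => z)). apply dconst. apply did. cbv beta; ring.
        - intros c Hc. assert (Hcr : Rabs c <= R).
          { unfold R. apply Rabs_le. pose proof (Rabs_bnd x0). pose proof (Rabs_bnd y). lra. }
          specialize (Hb c Hcr). apply Rabs_le_inv in Hb.
          assert (0 < exp (C * c)) by apply exp_pos. nra. }
      rewrite HE0 in H. assert (0 < exp (C * y)) by apply exp_pos.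
      specialize (HEpos y). nra. }
  unfold E in Ey. nra.
Qed.

Lemma Rpower_S x k : 0 < x -> Rpower x (k + 1) = x * Rpower x k.
Proof. intros. rewrite Rpower_plus, Rpower_1; auto. ring. Qed.

Lemma Rpower_pos x k : 0 < Rpower x k.
Proof. unfold Rpower; apply exp_pos. Qed.

Lemma ratio_lim k H H1 H2 G : ODE k H H1 H2 -> hermite_asymp k H -> k <> 0 ->
  hermite_asymp (k + 1) G ->
  forall e, 0 < e -> exists X, 0 < X /\ forall x, X < x ->
    0 < G x /\ Rabs ((G x - (x * H x - H1 x)) / G x) < e.
Proof.
  intros Hode Ha Hk Hg e He.
  set (d := Rmin (1/2) (e / 8)).
  assert (Hd0 : 0 < d) by (apply Rmin_pos; lra).
  assert (Hd1 : d <= 1/2) by apply Rmin_l. assert (Hd2 : d <= e / 8) by apply Rmin_r.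
  destruct (Hg d Hd0) as [A1 HA1]. destruct (Ha d Hd0) as [A2 HA2].
  destruct (u_to_0 k H H1 H2 Hode Ha Hk d Hd0) as [A3 HA3].
  set (X := Rmax (Rmax A1 A2) (Rmax A3 1)).
  assert (HX1 : A1 <= X) by (unfold X; eapply Rle_trans; [apply Rmax_l|apply Rmax_l]).
  assert (HX2 : A2 <= X) by (unfold X; eapply Rle_trans; [apply Rmax_r|apply Rmax_l]).
  assert (HX3 : A3 <= X) by (unfold X; eapply Rle_trans; [apply Rmax_l|apply Rmax_r]).
  assert (HX4 : 1 <= X) by (unfold X; eapply Rle_trans; [apply Rmax_r|apply Rmax_r]).
  exists X. split; [lra|]. intros x Hx.
  specialize (HA1 x ltac:(lra) ltac:(lra)). specialize (HA2 x ltac:(lra) ltac:(lra)).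
  destruct (HA3 x ltac:(lra)) as [Hdom Hu].
  destruct (dom_props k H H1 H2 Hode Ha Hk x Hdom) as [HHx _].
  rewrite Rpower_S in HA1 by lra.
  set (P := Rpower x k) in *. assert (HP : 0 < P) by apply Rpower_pos.
  set (a := G x / (x * P)) in *. set (b := H x / P) in *. set (v := uf H H1 x / x).
  apply Rabs_def2 in HA1. apply Rabs_def2 in HA2.
  assert (Hv : - d < v < d).
  { unfold v. apply Rabs_def2 in Hu.
    assert (Hxp : 0 < / x <= 1).
    { split. apply Rinv_0_lt_compat; lra. rewrite <- Rinv_1. apply Rinv_le_contravar; lra. }
    unfold Rdiv. split; nra. }
  assert (HG : G x = a * (x * P)) by (unfold a; field; lra).
  assert (HH : H x = b * P) by (unfold b; field; lra).
  assert (HH1 : H1 x = v * x * b * P) by (unfold v, uf, b; field; repeat split; lra).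
  assert (Ha0 : 0 < a) by lra.
  split. rewrite HG. apply Rmult_lt_0_compat; nra.
  replace ((G x - (x * H x - H1 x)) / G x) with ((a - b + v * b) / a)
    by (rewrite HG, HH, HH1; field; repeat split; nra).
  assert (Hvb : - (3/2) * d < v * b < 3/2 * d) by (split; nra).
  unfold Rdiv. rewrite Rabs_mult, Rabs_right with (r := / a) by (left; apply Rinv_0_lt_compat; lra).
  assert (Hea : e * a > e / 2) by nra.
  assert (Hn : Rabs (a - b + v * b) < e * a).
  { apply Rabs_def1; lra. }
  assert (Hia : 0 < / a) by (apply Rinv_0_lt_compat; lra).
  apply Rlt_le_trans with (e * a * / a). apply Rmult_lt_compat_r; lra.
  replace (e * a * / a) with e by (field; lra). lra.
Qed.

Lemma G_id k H H1 H2 G G1 G2 : ODE k H H1 H2 -> hermite_asymp k H -> k <> 0 ->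
  ODE (k + 1) G G1 G2 -> hermite_asymp (k + 1) G ->
  forall x, G x = x * H x - H1 x.
Proof.
  intros Hode Ha Hk Hgode Hga.
  pose proof Hode as [Hd [Hd1 Ho]]. pose proof Hgode as [Gd [Gd1 Go]].
  set (Dl := fun x => G x - (x * H x - H1 x)).
  set (Dl1 := fun x => G1 x - (k + 1) * H x).
  set (Dl2 := fun x => G2 x - (k + 1) * H1 x).
  assert (HDl : ODE (k + 1) Dl Dl1 Dl2).
  { split; [|split].
    - intros x. unfold Dl, Dl1. eapply deq. eapply dminus. apply Gd.
      eapply dminus. eapply dmul. apply did. apply Hd. apply Hd1.
      cbv beta. specialize (Ho x). replace (H2 x) with (x * H1 x - k * H x) by lra. ring.
    - intros x. unfold Dl1, Dl2. eapply deq. eapply dminus. apply Gd1.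
      eapply (dmul (fun _ => k + 1) H). apply dconst. apply Hd. cbv beta. ring.
    - intros x. unfold Dl, Dl1, Dl2. specialize (Ho x). specialize (Go x).
      replace (G2 x) with (x * G1 x - (k + 1) * G x) by lra.
      replace (H2 x) with (x * H1 x - k * H x) in Ho by lra. nra. }
  pose proof HDl as [DDl [DDl1 ODl]].
  set (W := fun x => G x * Dl1 x - G1 x * Dl x).
  assert (HW : forall x, D W x (x * W x)).
  { intros x. unfold W. eapply deq. eapply dminus; eapply dmul; eauto.
    cbv beta. specialize (ODl x). specialize (Go x).
    replace (G2 x) with (x * G1 x - (k + 1) * G x) by lra.
    replace (Dl2 x) with (x * Dl1 x - (k + 1) * Dl x) by lra. ring. }
  set (V := fun x => W x * exp (- (x * x) / 2)).
  assert (HV : forall x, D V x 0).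
  { intros x. unfold V. eapply deq. eapply dmul. apply HW. apply dgauss. cbv beta. ring. }
  assert (HVc : forall x, V x = V 0).
  { intros x. destruct (Rle_lt_dec 0 x).
    - symmetry. apply mvt_eq; auto.
    - apply mvt_eq; auto; lra. }
  set (C := V 0).
  assert (HWC : forall x, W x = C * exp ((x * x) / 2)).
  { intros x. unfold C; rewrite <- (HVc x). unfold V.
    rewrite Rmult_assoc, <- exp_plus. replace (- (x * x) / 2 + x * x / 2) with 0 by field.
    rewrite exp_0. ring. }
  set (r := fun x => Dl x / G x).
  assert (Hr : forall x, G x <> 0 -> D r x (W x / (G x) ^ 2)).
  { intros x Hx. unfold r. eapply deq. apply derivable_pt_lim_div; auto.
    unfold W, Rsqr. simpl. field. auto. }
  destruct (ratio_lim k H H1 H2 G Hode Ha Hk Hga 1 ltac:(lra)) as [X1 [HX1 HR1]].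
  assert (HR1' : forall x, X1 < x -> 0 < G x /\ Rabs (r x) < 1) by (intros; unfold r, Dl; auto).
  destruct (Req_dec C 0) as [HC0|HC0].
  -
    set (x1 := X1 + 1).
    assert (Hrc : forall x, x1 <= x -> r x = r x1).
    { intros x Hx. symmetry. apply mvt_eq; auto. intros c Hc.
      destruct (HR1' c ltac:(unfold x1 in *; lra)) as [Hgc _].
      eapply deq. apply Hr. lra. rewrite HWC, HC0. field. lra. }
    assert (Hr0 : r x1 = 0).
    { apply NNPP. intros Hne.
      destruct (ratio_lim k H H1 H2 G Hode Ha Hk Hga (Rabs (r x1)) ltac:(apply Rabs_pos_lt; auto))
        as [X2 [HX2 HR2]].
      set (y := Rmax X2 x1 + 1).
      assert (X2 < y) by (unfold y; pose proof (Rmax_l X2 x1); lra).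
      assert (x1 <= y) by (unfold y; pose proof (Rmax_r X2 x1); lra).
      destruct (HR2 y ltac:(lra)) as [_ Hy]. fold (Dl y) in Hy. fold (r y) in Hy.
      rewrite (Hrc y) in Hy by lra. lra. }
    destruct (HR1' x1 ltac:(unfold x1; lra)) as [Hg1 _].
    assert (HDl0 : Dl x1 = 0).
    { unfold r in Hr0. apply (f_equal (fun z => z * G x1)) in Hr0.
      replace (Dl x1 / G x1 * G x1) with (Dl x1) in Hr0 by (field; lra). lra. }
    assert (HDl10 : Dl1 x1 = 0).
    { assert (HW0 : W x1 = 0) by (rewrite HWC, HC0; ring). unfold W in HW0. rewrite HDl0 in HW0.
      assert (HW1 : G x1 * Dl1 x1 = 0) by lra. apply Rmult_integral in HW1. destruct HW1; auto; lra. }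
    intros x. pose proof (ode_unique (k + 1) Dl Dl1 Dl2 x1 HDl HDl0 HDl10 x) as HU.
    unfold Dl in HU. lra.
  -
    exfalso.
    destruct (asy_bounds (k + 1) G Hga) as [A3 [HA3 HGb]].
    set (L := ln (9/4) - ln (Rabs C)).
    set (X2 := 4 * Rabs (k + 1) + 2 * Rabs L + 2).
    set (x0 := Rmax (Rmax X1 A3) X2 + 1).
    assert (Hx01 : X1 < x0) by (unfold x0; pose proof (Rmax_l (Rmax X1 A3) X2); pose proof (Rmax_l X1 A3); lra).
    assert (Hx02 : A3 < x0) by (unfold x0; pose proof (Rmax_l (Rmax X1 A3) X2); pose proof (Rmax_r X1 A3); lra).
    assert (Hx03 : X2 < x0) by (unfold x0; pose proof (Rmax_r (Rmax X1 A3) X2); lra).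
    assert (HkA := Rabs_pos (k + 1)). assert (HLA := Rabs_pos L).
    assert (HX2 : 2 <= X2) by (unfold X2; lra).
    assert (Hbig : forall x, x0 <= x -> 1 <= Rabs (W x / (G x) ^ 2)).
    { intros x Hx. destruct (HR1' x ltac:(lra)) as [Hgx _].
      specialize (HGb x ltac:(lra)). unfold Rpower in HGb.
      assert (Hx1 : 1 <= x) by lra.
      assert (Hln := ln_le_sub1 x ltac:(lra)). assert (Hln0 := ln_pos_ge1 x Hx1).
      assert (Hkl : 2 * (k + 1) * ln x <= 2 * Rabs (k + 1) * x).
      { pose proof (Rabs_bnd (k + 1)). nra. }
      assert (Hxx : 2 * Rabs (k + 1) * x + Rabs L <= x * x / 2).
      { assert (HxX : x >= X2) by lra. unfold X2 in HxX. nra. }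
      assert (Hl : ln (9/4) + 2 * ((k + 1) * ln x) <= ln (Rabs C) + x * x / 2).
      { pose proof (Rabs_bnd L). unfold L in *. lra. }
      assert (HC' : 0 < Rabs C) by (apply Rabs_pos_lt; auto).
      assert (He : exp (ln (9/4) + 2 * ((k + 1) * ln x)) <= exp (ln (Rabs C) + x * x / 2)).
      { destruct Hl as [Hl|Hl]. left; apply exp_increasing; auto. rewrite Hl; lra. }
      rewrite !exp_plus, exp_ln, exp_ln in He by lra.
      replace (2 * ((k + 1) * ln x)) with ((k + 1) * ln x + (k + 1) * ln x) in He by ring.
      rewrite exp_plus in He.
      set (Ex := exp ((k + 1) * ln x)) in *.
      assert (HGx2 : G x ^ 2 <= Rabs C * exp (x * x / 2)).
      { assert (G x * G x <= 9 / 4 * (Ex * Ex)) by nra. simpl. lra. }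
      rewrite HWC. unfold Rdiv. rewrite Rabs_mult, Rabs_mult.
      rewrite (Rabs_right (exp _)) by (left; apply exp_pos).
      rewrite (Rabs_right (/ _)) by (left; apply Rinv_0_lt_compat; simpl; nra).
      assert (0 < G x ^ 2) by (simpl; nra).
      apply Rmult_le_reg_r with (G x ^ 2); auto.
      rewrite Rmult_assoc, Rinv_l by lra. lra. }
    destruct (MVT_cor2 r (fun x => W x / (G x) ^ 2) x0 (x0 + 3)) as [c [Hc1 Hc2]]. lra.
    { intros c Hc. apply Hr. destruct (HR1' c ltac:(lra)). lra. }
    destruct (HR1' x0 ltac:(lra)) as [_ Ha0]. destruct (HR1' (x0 + 3) ltac:(lra)) as [_ Ha3].
    specialize (Hbig c ltac:(lra)).
    apply Rabs_def2 in Ha0. apply Rabs_def2 in Ha3.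
    replace (x0 + 3 - x0) with 3 in Hc1 by ring.
    assert (Habs : Rabs (r (x0 + 3) - r x0) = Rabs (W c / G c ^ 2) * 3).
    { rewrite Hc1, Rabs_mult, (Rabs_right 3) by lra. auto. }
    assert (Rabs (r (x0 + 3) - r x0) < 2) by (apply Rabs_def1; lra).
    lra.
Qed.


Lemma inv_incr (f g f' : R -> R) (P : R -> Prop) a b x :
  a < x < b ->
  (forall t, a <= t <= b -> P (g t) /\ f (g t) = t) ->
  (forall q, P q -> D f q (f' q)) ->
  (forall q1 q2, P q1 -> q1 < q2 -> f q1 < f q2) ->
  (forall q1 q, P q1 -> q1 <= q -> P q) ->
  f' (g x) <> 0 -> D g x (1 / f' (g x)).
Proof.
  intros Hx Hg Hd Hinc Hup Hnz.
  assert (Hgi : forall t1 t2, a <= t1 -> t1 < t2 -> t2 <= b -> g t1 < g t2).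
  { intros t1 t2 H1 H2 H3. destruct (Rlt_le_dec (g t1) (g t2)) as [|Hle]; auto. exfalso.
    destruct (Hg t1 ltac:(lra)) as [P1 E1]. destruct (Hg t2 ltac:(lra)) as [P2 E2].
    destruct Hle as [Hle|Hle].
    - pose proof (Hinc _ _ P2 Hle). lra.
    - rewrite Hle in E2. lra. }
  assert (Hgle : forall t1 t2, a <= t1 -> t1 <= t2 -> t2 <= b -> g t1 <= g t2).
  { intros t1 t2 H1 H2 H3. destruct H2 as [H2|H2]. left; apply Hgi; lra. subst; lra. }
  destruct (Hg a ltac:(lra)) as [Pa Ea]. destruct (Hg b ltac:(lra)) as [Pb Eb].
  assert (Hab : g a < g b) by (apply Hgi; lra).
  assert (HPi : forall q, g a <= q -> P q) by (intros q Hq; apply (Hup (g a)); auto).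
  assert (Hcont : continuity_pt g x).
  { apply (continuity_pt_recip_interv f g (g a) (g b) Hab).
    - intros y z Hy Hyz Hz. apply Hinc; auto.
    - intros y Hy1 Hy2. rewrite Ea, Eb in *. unfold comp, id. apply Hg; lra.
    - intros y Hy1 Hy2. rewrite Ea, Eb in *. split; apply Hgle; lra.
    - intros q Hq. apply (dcont f q (f' q)). apply Hd, HPi; lra.
    - rewrite Ea, Eb; lra. }
  set (Prf := fun (y : R) (Hy : g a <= y <= g b) =>
     exist (fun l => D f y l) (f' y) (Hd y (HPi y (proj1 Hy))) : derivable_pt f y).
  assert (Hgx : g a <= g x <= g b) by (split; apply Hgle; lra).
  pose proof (derivable_pt_lim_recip_interv f g a b x Prf Hcont ltac:(lra) Hx Hgx) as HH.
  simpl in HH. apply HH; auto.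
  intros y Hy. unfold comp, id. apply Hg; auto.
Qed.

Definition Qf k H Hd t := epsilon (inhabits 0) (fun q => in_dom k H q /\ sg k * uf H Hd q = t).

Lemma Qf_spec k H Hd H2 : ODE k H Hd H2 -> hermite_asymp k H -> k <> 0 ->
  forall t, 0 < t -> in_dom k H (Qf k H Hd t) /\ sg k * uf H Hd (Qf k H Hd t) = t.
Proof.
  intros Hode Ha Hk t Ht. unfold Qf. apply epsilon_spec.
  apply (q_exists k H Hd H2); auto.
Qed.

Lemma Qf_deriv k H Hd H2 : ODE k H Hd H2 -> hermite_asymp k H -> k <> 0 ->
  forall t, 0 < t -> D (Qf k H Hd) t (1 / (sg k * wf k H Hd (Qf k H Hd t))).
Proof.
  intros Hode Ha Hk t Ht.
  set (g := fun tau => Qf k H Hd (- tau)).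
  assert (Hg : D g (- t) (1 / (- (sg k * wf k H Hd (g (- t)))))).
  { apply (inv_incr (fun q => - (sg k * uf H Hd q)) g (fun q => - (sg k * wf k H Hd q))
             (in_dom k H) (- (2 * t)) (- (t / 2))).
    - lra.
    - intros tau Htau. unfold g. destruct (Qf_spec k H Hd H2 Hode Ha Hk (- tau) ltac:(lra)).
      split; auto. lra.
    - intros q Hq. apply derivable_pt_lim_opp with (f := fun y => sg k * uf H Hd y).
      apply (dsgu k H Hd H2); auto.
    - intros q1 q2 Hq1 Hq. pose proof (sgu_decr k H Hd H2 Hode Ha Hk q1 q2 Hq1 Hq). lra.
    - intros q1 q Hq1 Hq. eapply dom_up; eauto.
    - unfold g. rewrite Ropp_involutive.
      pose proof (sgw_neg k H Hd H2 Hode Ha Hk (Qf k H Hd t) (proj1 (Qf_spec k H Hd H2 Hode Ha Hk t Ht))).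
      lra. }
  unfold g in Hg. rewrite Ropp_involutive in Hg.
  pose proof (sgw_neg k H Hd H2 Hode Ha Hk (Qf k H Hd t) (proj1 (Qf_spec k H Hd H2 Hode Ha Hk t Ht))).
  eapply dext with (g := fun y => g (- y)).
  { intros y. unfold g. rewrite Ropp_involutive. auto. }
  eapply deq. eapply dcomp. apply derivable_pt_lim_opp with (f := fun y => y). apply did.
  cbv beta. unfold g. apply Hg.
  field. split; intro Hc; rewrite Hc in H0; lra.
Qed.

Lemma sg_cases k : sg k = 1 \/ sg k = -1.
Proof. unfold sg; destruct Rlt_dec; auto. Qed.

Definition Rm k (H : R -> R) (q : R) := Rpower (H q) (/ k).
Definition Phi k H Hd q := (q - uf H Hd q) / Rm k H q.
Definition pp k := 1 + / k.
Definition F1f k H Hd t := - sg k * pp k / Rm k H (Qf k H Hd t).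
Definition F2f k H Hd t := pp k / k * uf H Hd (Qf k H Hd t) /
   (Rm k H (Qf k H Hd t) * wf k H Hd (Qf k H Hd t)).

Lemma Rm_pos k H q : 0 < Rm k H q.
Proof. apply Rpower_pos. Qed.

Lemma Fk_val k H Hd H2 G : ODE k H Hd H2 -> hermite_asymp k H -> k <> 0 ->
  (forall x, G x = x * H x - Hd x) ->
  forall t, 0 < t -> Fk k H Hd G t = Phi k H Hd (Qf k H Hd t).
Proof.
  intros Hode Ha Hk HG t Ht. unfold Fk. destruct (Req_EM_T t 0) as [|_]; [lra|].
  destruct (Qf_spec k H Hd H2 Hode Ha Hk t Ht) as [HQd HQu].
  set (Pr := fun v => exists q, in_dom k H q /\ t = Rabs (Hd q / H q) /\
                 v = G q / Rpower (H q) (1 + / k)).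
  assert (HP : Pr (epsilon (inhabits 0) Pr)).
  { apply epsilon_spec. exists (G (Qf k H Hd t) / Rpower (H (Qf k H Hd t)) (1 + / k)).
    exists (Qf k H Hd t). split; auto. split; auto.
    rewrite (abs_u k H Hd H2); auto. }
  destruct HP as [q [Hq [Htq Hv]]]. fold Pr. rewrite Hv.
  rewrite (abs_u k H Hd H2) in Htq; auto.
  assert (Hqe : q = Qf k H Hd t) by (apply (q_unique k H Hd H2); auto; lra).
  rewrite <- Hqe. destruct (dom_props k H Hd H2 Hode Ha Hk q Hq) as [Hh _].
  unfold Phi, Rm, uf. rewrite HG, Rpower_plus, Rpower_1 by auto.
  assert (0 < Rpower (H q) (/ k)) by apply Rpower_pos.
  field. lra.
Qed.

Lemma dRm k H Hd H2 : ODE k H Hd H2 -> forall q, 0 < H q ->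
  D (Rm k H) q (/ k * Rm k H q * uf H Hd q).
Proof.
  intros [Hd0 _] q Hq. unfold Rm. eapply deq. eapply (dcomp (fun s => Rpower s (/ k)) H).
  apply Hd0. apply drpow; auto. unfold uf, Rdiv. ring.
Qed.

Lemma dPhi k H Hd H2 : ODE k H Hd H2 -> k <> 0 -> forall q, 0 < H q ->
  D (Phi k H Hd) q (- pp k * wf k H Hd q / Rm k H q).
Proof.
  intros Hode Hk q Hq. unfold Phi.
  assert (0 < Rm k H q) by apply Rm_pos.
  eapply deq. apply derivable_pt_lim_div.
  eapply dminus. apply did. apply (du k H Hd H2); auto; lra.
  apply (dRm k H Hd H2); auto. lra.
  unfold pp, wf, Rsqr. field. lra.
Qed.

Lemma dF k H Hd H2 G : ODE k H Hd H2 -> hermite_asymp k H -> k <> 0 ->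
  (forall x, G x = x * H x - Hd x) ->
  forall t, 0 < t -> D (Fk k H Hd G) t (F1f k H Hd t).
Proof.
  intros Hode Ha Hk HG t Ht.
  apply (dloc _ (fun y => Phi k H Hd (Qf k H Hd y)) t _ (t / 2)). lra.
  { intros y Hy. apply (Fk_val k H Hd H2); auto; lra. }
  destruct (Qf_spec k H Hd H2 Hode Ha Hk t Ht) as [HQd HQu].
  destruct (dom_props k H Hd H2 Hode Ha Hk _ HQd) as [Hh _].
  pose proof (sgw_neg k H Hd H2 Hode Ha Hk _ HQd) as Hw.
  assert (0 < Rm k H (Qf k H Hd t)) by apply Rm_pos.
  eapply deq. eapply dcomp. apply (Qf_deriv k H Hd H2); auto.
  apply (dPhi k H Hd H2); auto.
  unfold F1f. assert (Hs := sg_sq k).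
  assert (wf k H Hd (Qf k H Hd t) <> 0) by (intro Hc; rewrite Hc in Hw; lra).
  assert (sg k <> 0) by (intro Hc; rewrite Hc in Hw; lra).
  destruct (sg_cases k) as [Hs'|Hs']; rewrite Hs'; field; lra.
Qed.

Lemma dF1 k H Hd H2 : ODE k H Hd H2 -> hermite_asymp k H -> k <> 0 ->
  forall t, 0 < t -> D (F1f k H Hd) t (F2f k H Hd t).
Proof.
  intros Hode Ha Hk t Ht.
  destruct (Qf_spec k H Hd H2 Hode Ha Hk t Ht) as [HQd HQu].
  destruct (dom_props k H Hd H2 Hode Ha Hk _ HQd) as [Hh _].
  pose proof (sgw_neg k H Hd H2 Hode Ha Hk _ HQd) as Hw.
  assert (HR : 0 < Rm k H (Qf k H Hd t)) by apply Rm_pos.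
  apply (dext _ (fun y => (- sg k * pp k) * / Rm k H (Qf k H Hd y))).
  { intros y. unfold F1f. unfold Rdiv. ring. }
  eapply deq. eapply (dmul (fun _ => - sg k * pp k)). apply dconst.
  apply dinv. lra. eapply dcomp. apply (Qf_deriv k H Hd H2); auto.
  apply (dRm k H Hd H2); auto.
  unfold F2f. cbv beta.
  assert (wf k H Hd (Qf k H Hd t) <> 0) by (intro Hc; rewrite Hc in Hw; lra).
  destruct (sg_cases k) as [Hs'|Hs']; rewrite Hs'; field; repeat split; lra.
Qed.


Lemma alg k s q u Rm w R1 R2 x y Fv F1v F2v :
  k <> 0 -> (s = 1 \/ s = -1) -> 0 < Rm -> w <> 0 -> u <> 0 -> 0 < x ->
  w = q * u - k - u ^ 2 -> y / x = s * u -> R1 = x * R2 ->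
  Fv = (q - u) / Rm -> F1v = - s * (1 + / k) / Rm -> F2v = (1 + / k) / k * u / (Rm * w) ->
  R2 * F2v * (R2 * ((1 + / k - 1) * ((1 + / k) * Fv - y / x * F1v) - y / x * ((1 + / k - 1) * F1v - y / x * F2v)) + R1 * F1v / y)
   - (R2 * ((1 + / k - 1) * F1v - y / x * F2v)) ^ 2 = 0.
Proof.
  intros Hk Hs HR Hw Hu Hx Hwe Ht HR1 HF HF1 HF2.
  assert (Hy : y = s * u * x) by (rewrite <- Ht; field; lra).
  rewrite Ht. rewrite Hy, HR1, HF, HF1, HF2. subst w.
  destruct Hs as [-> | ->]; field; repeat split; auto; lra.
Qed.

Lemma F2_sign k u w Rm F2v : k <> 0 -> 0 < Rm -> u * w < 0 ->
  F2v = (1 + / k) / k * u / (Rm * w) ->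
  (-1 < k -> F2v < 0) /\ (k < -1 -> 0 < F2v).
Proof.
  intros Hk HR Huw HF.
  assert (Hw : w <> 0) by (intro Hc; rewrite Hc in Huw; lra).
  assert (E : F2v = (k + 1) * (u * w) / (k * k * Rm * (w * w))) by (rewrite HF; field; repeat split; auto; lra).
  assert (Hd : 0 < k * k * Rm * (w * w)).
  { apply Rmult_lt_0_compat. apply Rmult_lt_0_compat; auto. nra.
    assert (0 < w * w) by nra. auto. }
  rewrite E. split; intros Hk1; unfold Rdiv.
  - assert (0 < / (k * k * Rm * (w * w))) by (apply Rinv_0_lt_compat; auto).
    assert ((k + 1) * (u * w) < 0) by nra. nra.
  - assert (0 < / (k * k * Rm * (w * w))) by (apply Rinv_0_lt_compat; auto).
    assert (0 < (k + 1) * (u * w)) by nra. nra.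
Qed.

Lemma L1 (phi phi' : R -> R) e x y : 0 < x -> D phi (y / x) (phi' (y / x)) ->
  D (fun s => Rpower s e * phi (y / s)) x
    (Rpower x (e - 1) * (e * phi (y / x) - y / x * phi' (y / x))).
Proof.
  intros Hx Hd.
  assert (HR : Rpower x e = x * Rpower x (e - 1)).
  { rewrite <- Rpower_S by auto. f_equal. ring. }
  eapply deq. eapply dmul. apply drpow; auto.
  eapply (dcomp phi (fun s => y / s)).
  eapply (dmul (fun _ => y) (fun s => / s)). apply dconst. apply dinv. lra. apply did.
  apply Hd.
  cbv beta. rewrite HR. field. lra.
Qed.

Lemma L2 (phi phi' : R -> R) e x y : 0 < x -> D phi (y / x) (phi' (y / x)) ->
  D (fun t => Rpower x e * phi (t / x)) y (Rpower x (e - 1) * phi' (y / x)).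
Proof.
  intros Hx Hd.
  assert (HR : Rpower x e = x * Rpower x (e - 1)).
  { rewrite <- Rpower_S by auto. f_equal. ring. }
  eapply deq. eapply (dmul (fun _ => Rpower x e)). apply dconst.
  eapply (dcomp phi (fun t => t / x)).
  eapply (dmul (fun t => t) (fun _ => / x)). apply did. apply dconst.
  apply Hd.
  cbv beta. rewrite HR. field. lra.
Qed.

Lemma quad_neg a b c : c * a - b ^ 2 = 0 -> c < 0 -> nsd2 a b c.
Proof.
  intros He Hc u v.
  assert (E : c * (a * u * u + 2 * b * u * v + c * v * v) = (b * u + c * v) * (b * u + c * v)
               + (c * a - b ^ 2) * u * u) by ring.
  rewrite He in E. assert (0 <= (b * u + c * v) * (b * u + c * v)) by apply Rle_0_sqr.
  nra.
Qed.

Lemma quad_pos a b c : c * a - b ^ 2 = 0 -> 0 < c -> psd2 a b c.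
Proof.
  intros He Hc u v.
  assert (E : c * (a * u * u + 2 * b * u * v + c * v * v) = (b * u + c * v) * (b * u + c * v)
               + (c * a - b ^ 2) * u * u) by ring.
  rewrite He in E. assert (0 <= (b * u + c * v) * (b * u + c * v)) by apply Rle_0_sqr.
  nra.
Qed.

Theorem mainTheorem8 (k : R) (H Hd G : R -> R)
  (hk0 : k <> 0) (hk1 : k <> -1)
  (hH : is_hermite k H) (hHd : forall x, derivable_pt_lim H x (Hd x))
  (hG : is_hermite (k + 1) G) :
  let M := Mfun k H Hd G in
  (exists Mx My Mxx Mxy Myy : R -> R -> R,
     forall x y, 0 < x -> 0 < y ->
       derivable_pt_lim (fun s => M s y) x (Mx x y) /\
       derivable_pt_lim (fun t => M x t) y (My x y) /\
       derivable_pt_lim (fun s => Mx s y) x (Mxx x y) /\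
       derivable_pt_lim (fun t => Mx x t) y (Mxy x y) /\
       derivable_pt_lim (fun s => My s y) x (Mxy x y) /\
       derivable_pt_lim (fun t => My x t) y (Myy x y) /\
       Myy x y * (Mxx x y + My x y / y) - (Mxy x y) ^ 2 = 0 /\
       (-1 < k -> nsd2 (Mxx x y + My x y / y) (Mxy x y) (Myy x y)) /\
       (k < -1 -> psd2 (Mxx x y + My x y / y) (Mxy x y) (Myy x y))) /\
  (forall x, 0 < x -> M x 0 = Rpower x (1 + / k)).
Proof.
  intros M.
  destruct hH as [[H1 [H2 [Hd1 [Hd2 Ho]]]] Ha].
  assert (E1 : forall x, Hd x = H1 x) by (intro x; eapply uniqueness_limite; eauto).
  assert (Hode : ODE k H Hd H2).
  { split; [auto|split].
    - intros x. apply (dext Hd H1 x); auto.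
    - intros x. rewrite E1. apply Ho. }
  destruct hG as [[G1 [G2 [Gd1 [Gd2 Go]]]] Ga].
  assert (Hgode : ODE (k + 1) G G1 G2) by (split; auto).
  assert (HG := G_id k H Hd H2 G G1 G2 Hode Ha hk0 Hgode Ga).
  set (p := 1 + / k).
  set (F := Fk k H Hd G). set (F1 := F1f k H Hd). set (F2 := F2f k H Hd).
  set (Psi := fun t => p * F t - t * F1 t).
  set (Psi' := fun t => (p - 1) * F1 t - t * F2 t).
  assert (dF_ : forall t, 0 < t -> D F t (F1 t)) by (intros; apply (dF k H Hd H2); auto).
  assert (dF1_ : forall t, 0 < t -> D F1 t (F2 t)) by (intros; apply (dF1 k H Hd H2); auto).
  assert (dPsi : forall t, 0 < t -> D Psi t (Psi' t)).
  { intros t Ht. unfold Psi, Psi'. eapply deq. eapply dminus.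
    eapply (dmul (fun _ => p) F). apply dconst. apply dF_; auto.
    eapply dmul. apply did. apply dF1_; auto. cbv beta. ring. }
  split.
  - exists (fun x y => Rpower x (p - 1) * Psi (y / x)),
      (fun x y => Rpower x (p - 1) * F1 (y / x)),
      (fun x y => Rpower x (p - 1 - 1) * ((p - 1) * Psi (y / x) - y / x * Psi' (y / x))),
      (fun x y => Rpower x (p - 1 - 1) * Psi' (y / x)),
      (fun x y => Rpower x (p - 1 - 1) * F2 (y / x)).
    intros x y Hx Hy. assert (Ht : 0 < y / x) by (apply Rdiv_lt_0_compat; auto).
    split; [|split; [|split; [|split; [|split; [|split]]]]].
    + apply (L1 F F1 p x y Hx (dF_ _ Ht)).
    + apply (L2 F F1 p x y Hx (dF_ _ Ht)).
    + apply (L1 Psi Psi' (p - 1) x y Hx (dPsi _ Ht)).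
    + apply (L2 Psi Psi' (p - 1) x y Hx (dPsi _ Ht)).
    + apply (L1 F1 F2 (p - 1) x y Hx (dF1_ _ Ht)).
    + apply (L2 F1 F2 (p - 1) x y Hx (dF1_ _ Ht)).
    + destruct (Qf_spec k H Hd H2 Hode Ha hk0 (y / x) Ht) as [HQd HQu].
      set (q := Qf k H Hd (y / x)) in *.
      pose proof (sgw_neg k H Hd H2 Hode Ha hk0 q HQd) as Hw.
      pose proof (sgu_pos k H Hd H2 Hode Ha hk0 q HQd) as Hu.
      pose proof (sg_sq k) as Hsq.
      assert (Hw0 : wf k H Hd q <> 0) by (intro Hc; rewrite Hc in Hw; lra).
      assert (Hu0 : uf H Hd q <> 0) by (intro Hc; rewrite Hc in Hu; lra).
      assert (Huw : uf H Hd q * wf k H Hd q < 0).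
      { assert (E : uf H Hd q * wf k H Hd q = (sg k * uf H Hd q) * (sg k * wf k H Hd q))
          by (replace (sg k * uf H Hd q * (sg k * wf k H Hd q)) with
                (sg k * sg k * (uf H Hd q * wf k H Hd q)) by ring; rewrite Hsq; ring).
        rewrite E. nra. }
      assert (HR1 : Rpower x (p - 1) = x * Rpower x (p - 1 - 1)).
      { rewrite <- Rpower_S by auto. f_equal. ring. }
      assert (HF : F (y / x) = (q - uf H Hd q) / Rm k H q).
      { unfold F. rewrite (Fk_val k H Hd H2 G); auto. }
      assert (Hid := alg k (sg k) q (uf H Hd q) (Rm k H q) (wf k H Hd q)
        (Rpower x (p - 1)) (Rpower x (p - 1 - 1)) x y (F (y / x)) (F1 (y / x)) (F2 (y / x))
        hk0 (sg_cases k) (Rm_pos k H q) Hw0 Hu0 Hx eq_refl (eq_sym HQu) HR1 HF eq_refl eq_refl).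
      assert (Hc := F2_sign k (uf H Hd q) (wf k H Hd q) (Rm k H q) (F2 (y / x)) hk0 (Rm_pos k H q) Huw eq_refl).
      assert (HRp : 0 < Rpower x (p - 1 - 1)) by apply Rpower_pos.
      split; [exact Hid|]. split.
      * intros Hk1. apply quad_neg. exact Hid. destruct Hc as [Hc _]. specialize (Hc Hk1).
        cbv beta. nra.
      * intros Hk1. apply quad_pos. exact Hid. destruct Hc as [_ Hc]. specialize (Hc Hk1).
        cbv beta. nra.
  - intros x Hx. unfold M, Mfun, Fk. replace (0 / x) with 0 by (field; lra).
    destruct (Req_EM_T 0 0); [unfold p; ring|congruence].
Qed.
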